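(* In the construction below, let $k\in\{0,\dots,K-1\}$ and let $S\subseteq X$ be a nonempty set with $\mathrm{diam}_X(S)\le 2\tau^{-k}$. If $u'\in S\cap U_{k+1}$, then $(\mathsf f_k(S),u')\in A_k$.
   Context: Construction. Let $(X,d)$ be a metric space with $n=|X|\ge2$ and $\mathrm{diam}(X)=1$. For $S\subseteq X$, $r\ge0$: $B_X(S,r):=\{x\in X:\exists s\in S,\ d(x,s)\le r\}$ and $B_X(x,r):=B_X(\{x\},r)$. Let $\varepsilon_0:=\min\{d(x,y):x\ne y\}$, $\tau:=12$, $K:=1+\lceil\log_\tau(1/\varepsilon_0)\rceil$. For $\eta>0$ the greedy $\eta$-net is built as: $N_0=\emptyset$; for $j\ge1$, $S_j:=X\setminus B_X(N_{j-1},\eta)$; if $S_j=\emptyset$ output $N_{j-1}$; else pick $x_j\in S_j$ maximizing $|B_X(x,\eta/3)|$ and set $N_j=N_{j-1}\cup\{x_j\}$. For $k=0,\dots,K$ let $U_k$ be the greedy $\tau^{-k}$-net. For $k<K$, $A_k$ is the set of pairs $(u,u')\in U_k\times U_{k+1}$ with (i) $d(u,u')\le4\tau^{-k}$ and (ii) $|B_X(u,\tau^{-k}/3)|\ge\max\{|B_X(w,\tau^{-k}/3)|:w\in B_X(u',6\tau^{-(k+1)})\}$. For $S\subseteq X$ nonempty, $\mathsf f_k(S)$ denotes a (fixed) maximizer of $|B_X(y,\tau^{-k}/3)|$ over $y\in B_X(S,2\tau^{-k})\cap U_k$. *)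

(* Defs.v *)
From HB Require Import structures.
From mathcomp Require Import all_boot all_order all_algebra.
From mathcomp Require Import all_classical all_reals exp.
Set Implicit Arguments. Unset Strict Implicit. Unset Printing Implicit Defensive.
Import Order.TTheory GRing.Theory Num.Theory.
Local Open Scope ring_scope.

Section Defs.
Variables (R : realType) (T : finType) (d : T -> T -> R).

Definition is_metric : Prop :=
  [/\ forall x y, 0 <= d x y,
      forall x y, d x y = 0 <-> x = y,
      forall x y, d x y = d y x &
      forall x y z, d x z <= d x y + d y z].

(* diameter of a subset (0 for the empty set) *)
Definition diam (S : {set T}) : R :=
  \big[Num.max/0]_(p : T * T | (p.1 \in S) && (p.2 \in S)) d p.1 p.2.

Definition ballS (S : {set T}) (r : R) : {set T} :=
  [set x | [exists s in S, d x s <= r]].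
Definition ball (x : T) (r : R) : {set T} := ballS [set x] r.

(* eps_0 = min distance between distinct points (default value 1 is
   irrelevant as soon as |X| >= 2) *)
Definition eps0 : R :=
  \big[Num.min/1]_(p : T * T | p.1 != p.2) d p.1 p.2.

Definition tau : R := 12.

Definition Kpar : int := 1 + Num.ceil (ln (eps0^-1) / ln tau).

(* N is a possible output of the greedy eta-net procedure (any
   tie-breaking): xs = [x_1; ...; x_m] is the sequence of picked points,
   N_{j} = {x_1,...,x_j}. *)
Definition greedy_net (eta : R) (N : {set T}) : Prop :=
  exists xs : seq T,
    [/\ N = [set x in xs],
        (forall j : 'I_(size xs),
           let Nj := [set x in take j xs] in
           let xj := tnth (in_tuple xs) j in
           xj \notin ballS Nj eta /\
           forall x, x \notin ballS Nj eta ->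
             (#|ball x (eta / 3)| <= #|ball xj (eta / 3)|)%N) &
        forall x, x \in ballS [set x in xs] eta].
End Defs.

(* Main.v *)
Require Import Defs.
From HB Require Import structures.
From mathcomp Require Import all_boot all_order all_algebra.
From mathcomp Require Import all_classical all_reals exp.
Import Order.TTheory GRing.Theory Num.Theory.
Local Open Scope ring_scope.
From mathcomp Require Import ring lra.

Lemma diam_ge (R : realType) (T : finType) (d : T -> T -> R) (S : {set T}) s t :
  s \in S -> t \in S -> d s t <= diam d S.
Proof.
move=> hs ht; rewrite /diam (bigD1 (s, t)) /=; last by rewrite hs ht.
by rewrite Order.TotalTheory.le_max lexx.
Qed.

Theorem lemma3p3 (R : realType) (T : finType) (d : T -> T -> R)
  (Hmetric : is_metric d)
  (Hn : (2 <= #|T|)%N)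
  (Hdiam : diam d [set: T] = 1)
  (U : nat -> {set T})
  (HU : forall k : nat, (Posz k <= Kpar d)%R -> greedy_net d (tau R ^- k) (U k))
  (k : nat) (Hk : (Posz k < Kpar d)%R)
  (S : {set T}) (HS0 : S != finset.set0)
  (HSdiam : diam d S <= 2 * tau R ^- k)
  (fS : T)
  (HfS : fS \in ballS d S (2 * tau R ^- k) :&: U k)
  (HfSmax : forall y, y \in ballS d S (2 * tau R ^- k) :&: U k ->
      (#|ball d y (tau R ^- k / 3)| <= #|ball d fS (tau R ^- k / 3)|)%N)
  (u' : T) (Hu' : u' \in S :&: U k.+1) :
  (* (fS, u') \in A_k *)
  [/\ fS \in U k, u' \in U k.+1,
      d fS u' <= 4 * tau R ^- k &
      (\max_(w in ballS d [set u'] (6 * tau R ^- k.+1)) #|ball d w (tau R ^- k / 3)|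
         <= #|ball d fS (tau R ^- k / 3)|)%N].
Proof.
have [dpos deq dsym dtri] := Hmetric.
set r := tau R ^- k.
have r0 : 0 < r by rewrite /r invr_gt0 exprn_gt0 // /tau.
have r1 : tau R ^- k.+1 = r / 12 by rewrite /r /tau exprS invfM mulrC.
rewrite r1.
move: HfS Hu'; rewrite !inE => /andP[HfB HfU] /andP[HuS HuU].
have Hcand : forall y, y \in U k -> d y u' <= 2 * r -> (#|ball d y (r / 3)| <= #|ball d fS (r / 3)|)%N.
  move=> y yU dy; apply: HfSmax; rewrite !inE yU andbT.
  by apply/existsP; exists u'; rewrite HuS.
split => //.
- move: HfB; move=> /existsP[s /andP[sS ds]].
  have := @diam_ge _ _ d _ _ _ sS HuS; have := dtri fS s u'; move: ds HSdiam; rewrite -/r; lra.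
- apply/bigmax_leqP => w; rewrite inE => /existsP[s' /andP[]]; rewrite inE => /eqP -> dw.
  have [|xs [HN Hg Hcov]] := HU k; first by apply: ltW.
  have Pex : exists j, (j <= size xs)%N && (w \in ballS d [set x in take j xs] r).
    exists (size xs); rewrite leqnn take_size; move: (Hcov w); by rewrite /r.
  case: (ex_minnP Pex) => j /andP[jle wj] jmin.
  case: j jle wj jmin => [|i] jle wj jmin.
    by move: wj; rewrite take0 /ballS inE => /existsP[s /andP[]]; rewrite inE in_nil.
  have iS : (i < size xs)%N by [].
  have wni : w \notin ballS d [set x in take i xs] r.
    apply/negP => wi; have := jmin i; rewrite ltnW // wi => /(_ isT); by rewrite ltnn.
  have [_ Hmax] := Hg (Ordinal iS).
  have := Hmax w wni; rewrite (tnth_nth w) /= => hle.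
  apply: (leq_trans hle); apply: Hcand.
  + by rewrite HN inE mem_nth.
  + move: wj; rewrite (take_nth w iS) /ballS inE => /existsP[s /andP[]].
    rewrite inE mem_rcons in_cons => /orP[/eqP ->|sin] ds.
    * apply: le_trans (dtri _ w _) _; rewrite dsym; apply: le_trans (lerD ds dw) _; rewrite -/r; have h : r + 6 * (r / 12) = (3/2) * r by field. rewrite h ler_wpM2r ?ltW //; lra.
    * by move: wni; rewrite /ballS inE negb_exists => /forallP/(_ s); rewrite inE sin ds.
Qed.
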